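(* For all $n\ge1$, $\lfloor n/\varphi\rfloor+1\le f(n)\le\lfloor n\varphi\rfloor$, where $\varphi=(1+\sqrt5)/2$.
   Context: $\mathbb{N}=\{0,1,2,\dots\}$. The sequence $f:\mathbb{N}\to\mathbb{N}$ is defined greedily: $f(0)=0$, and for $n\ge1$, $f(n)$ is the least natural number such that (i) $f(n)\notin\{f(0),f(1),\dots,f(n-1)\}$ and (ii) $\sum_{1\le i\le n} f(i)$ is divisible by $n$. *)

(* Defs.v *)
From mathcomp Require Import all_boot all_order all_algebra.
From mathcomp Require Import reals.
Set Implicit Arguments. Unset Strict Implicit. Unset Printing Implicit Defensive.

(* Given s = [:: f 0; ...; f (n-1)] (so n = size s), the greedy next value:
   the least m not in s such that n divides f 1 + ... + f (n-1) + m
   (sumn s also contains f 0 = 0, which does not change the sum).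
   The search range [0, (n+1)^2) suffices: the residues r + k n (k <= n),
   r < n, all lie below (n+1)^2 and at most n of them are already used. *)
Definition greedy_next (s : seq nat) : nat :=
  find (fun m => (m \notin s) && (size s %| sumn s + m))
       (iota 0 ((size s).+1 ^ 2)).

Fixpoint fseq (n : nat) : seq nat :=
  match n with
  | 0 => [:: 0]
  | k.+1 => rcons (fseq k) (greedy_next (fseq k))
  end.

Definition f (n : nat) : nat := last 0 (fseq n).

(* Main.v *)
Require Import Defs.
From mathcomp Require Import all_boot all_order all_algebra.
From mathcomp Require Import reals.
Import Order.TTheory GRing.Theory Num.Theory.
From mathcomp Require Import reals ring lra zify.
Import Order.TTheory GRing.Theory Num.Theory.
Local Open Scope ring_scope.

Section Golden.
Variable R : realType.
Definition phi : R := (1 + Num.sqrt 5) / 2.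

Lemma phi_facts : phi * phi = phi + 1 /\ 1 < phi /\ phi < 2.
Proof.
have s0 : 0 <= Num.sqrt (5 : R) by apply: sqrtr_ge0.
have hs : Num.sqrt (5:R) * Num.sqrt 5 = 5 by rewrite -expr2 sqr_sqrtr.
rewrite /phi; split; last split; nra.
Qed.

Lemma phi2 : phi * phi = phi + 1. Proof. by case: phi_facts. Qed.
Lemma phi_gt1 : 1 < phi. Proof. by case: phi_facts => _ []. Qed.
Lemma phi_lt2 : phi < 2. Proof. by case: phi_facts => _ []. Qed.
Lemma phi_gt0 : 0 < phi. Proof. have := phi_gt1; lra. Qed.
Lemma phi_inv : 1 / phi = phi - 1.
Proof. have := phi_gt0; have := phi2 => h1 h2. apply/eqP; rewrite eq_sym -subr_eq0.
have -> : phi - 1 - 1 / phi = (phi * phi - phi - 1) / phi by field; lra.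
by rewrite h1 (_ : phi + 1 - phi - 1 = 0) ?mul0r //; ring. Qed.

Definition g (k : nat) : nat := Num.truncn (k%:R / phi).

Lemma gP k u : g k = u <-> (u%:R * phi <= k%:R /\ k%:R < u.+1%:R * phi).
Proof.
have p0 := phi_gt0.
rewrite /g; split.
  move=> <-; have /andP[h1 h2] := truncn_itv (divr_ge0 (ler0n _ k) (ltW p0)).
  by split; [rewrite -ler_pdivlMr | rewrite -ltr_pdivrMr].
move=> [h1 h2]; apply/eqP; rewrite truncn_eq; last by rewrite divr_ge0 // ltW.
by rewrite ler_pdivlMr // ltr_pdivrMr // h1 h2.
Qed.

Lemma gPr k u : g k = u -> u%:R * phi <= k%:R /\ k%:R < (u%:R + 1) * phi.
Proof. by move/gP; rewrite -natr1. Qed.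
Arguments gPr {k u}.
Lemma gPl k u : u%:R * phi <= k%:R -> k%:R < (u%:R + 1) * phi -> g k = u.
Proof. by move=> h1 h2; apply/gP; rewrite -natr1. Qed.

Lemma g0 : g 0 = 0%N.
Proof. have := phi_gt0; move=> p0; apply: gPl; rewrite ?mul0r //. by rewrite add0r mul1r. Qed.

Lemma gS k : g k.+1 = g k \/ g k.+1 = (g k).+1.
Proof.
have [a1 a2] := gPr (erefl (g k)).
have p1 := phi_gt1.
case: (ltrP (k%:R + 1) ((g k)%:R * phi + phi)) => h.
  left; apply: gPl; rewrite -natr1; lra.
right; apply: gPl; rewrite -!natr1; lra.
Qed.

Lemma g_mono m n : (m <= n)%N -> (g m <= g n)%N.
Proof.
elim: n => [|n IH]; first by rewrite leqn0 => /eqP ->.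
rewrite leq_eqVlt => /orP[/eqP -> //|]; rewrite ltnS => /IH h.
by case: (gS n) => ->; [|apply: leq_trans h _].
Qed.

Arguments g_mono {m n}.

Lemma g_lt k : (0 < k)%N -> (g k < k)%N.
Proof.
move=> k0; have [a1 a2] := gPr (erefl (g k)).
have p1 := phi_gt1.
have k1 : 1 <= k%:R :> R by rewrite ler1n.
have u0 : 0 <= (g k)%:R :> R by [].
rewrite -(ltr_nat R); nra.
Qed.

Arguments g_lt {k}.

Lemma g_plateau k : g k.+2 <> g k.
Proof.
move=> e; have [a1 a2] := gPr (erefl (g k)).
have [b1 b2] := gPr e.
have := phi_lt2; rewrite -!natr1 in b1 b2; lra.
Qed.

Lemma g1 : g 1 = 0%N.
Proof. have := phi_gt1; move=> p1; apply: gPl; rewrite ?mul0r ?add0r ?mul1r //. Qed.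

Lemma D3_real (p u k j kk : R): p * p = p + 1 -> 1 < p -> p < 2 ->
  u * p <= k - 1 -> k < (u + 1) * p -> kk - 1 < j * p -> j * p <= kk -> u + 1 = kk + j ->
  u < k - 1 - u + j /\ k - 1 - u + j < u + 1.
Proof. move=> h1 h2 h3 a1 a2 a3 a4 a5.
have e1 : u * p * p <= (k - 1) * p by rewrite ler_pM2r //; lra.
have e2 : k * p < (u + 1) * p * p by rewrite ltr_pM2r //; lra.
have q1 : u * p * p = u * p + u by rewrite -mulrA h1; ring.
have q2 : (u + 1) * p * p = (u + 1) * p + u + 1 by rewrite -mulrA h1; ring.
have b1 : u <= (k - 1 - u) * p by lra.
have b2 : (k - 1 - u) * p < u + 1 by lra.
have c1 : u * (p - 1) <= (k - 1 - u) * p * (p - 1) by rewrite ler_pM2r //; lra.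
have c2 : (k - 1 - u) * p * (p - 1) < (u + 1) * (p - 1) by rewrite ltr_pM2r //; lra.
have q3 : (k - 1 - u) * p * (p - 1) = k - 1 - u by rewrite mulrBr mulr1 -mulrA h1; ring.
have d1 : u < j * p + j by lra.
have d2 : j * p + j <= u + 1 by lra.
have f1 : u * (2 - p) < (j * p + j) * (2 - p) by rewrite ltr_pM2r //; lra.
have f2 : (j * p + j) * (2 - p) <= (u + 1) * (2 - p) by rewrite ler_pM2r //; lra.
have q4 : (j * p + j) * (2 - p) = j by rewrite (_ : (j * p + j) * (2 - p) = j * (2 * p - p * p + 2 - p)); [rewrite h1; ring | ring].
split; lra.
Qed.

Lemma D3 k k' : g k = g k.+1 -> g k'.+1 = (g k').+1 -> (g k.+1).+1 <> (k'.+1 + g k'.+1)%N.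
Proof.
move=> e1 e2 e3.
have [a1 _] := gPr e1.
have [_ a2] := gPr (erefl (g k.+1)).
have [_ a3] := gPr (erefl (g k')).
have [a4 _] := gPr e2.
have e3' : (g k.+1)%:R + 1 = (k'%:R + 1) + ((g k')%:R + 1) :> R.
  by rewrite natr1 e3 e2 natrD -!natr1.
have := @D3_real phi (g k.+1)%:R (k%:R + 1) ((g k')%:R + 1)
  (k'%:R + 1) phi2 phi_gt1 phi_lt2.
rewrite -!natr1 in a2 a4.
case; try lra.
move=> b1 b2.
have c1 : ((g k.+1) + (g k.+1) < k + (g k').+1)%N.
  by rewrite -(ltr_nat R) !natrD -!natr1; lra.
have c2 : (k + (g k').+1 < (g k.+1) + (g k.+1) + 1)%N.
  by rewrite -(ltr_nat R) !natrD -!natr1; lra.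
lia.
Qed.

Lemma M_real (p v m : R): p * p = p + 1 -> 1 < p -> m - 1 < v * p -> v * p <= m -> m < (v + 1) * p -> (v + 1) * p <= m + 1 -> (m - v - 1) < (2 * v + 1 - m) * p /\ (2 * v + 1 - m) * p <= m - v.
Proof. move=> h1 h2 h3 h4 h5 h6.
have p0 : 0 < p by lra.
have e1 : (m - 1) * p < v * p * p by rewrite ltr_pM2r.
have e2 : v * p * p <= (m + 1 - p) * p by rewrite ler_pM2r //; lra.
have e3 : v * p * p = v * p + v by rewrite -mulrA h1; ring.
split; nra. Qed.

Lemma Mstep v0 m0 : g m0 = v0 -> g m0.+1 = v0.+1 -> g m0.+2 = v0.+2 ->
  exists K, g K.+1 = (g K).+1 /\ (K.+1 + g K.+1)%N = v0.+2 /\ (K <= v0)%N.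
Proof.
move=> e0 e1 e2.
have [_ a1] := gPr e0.
have [a2 a3] := gPr e1.
have [a4 _] := gPr e2.
have l1 : (v0 < m0)%N.
  have := @g_lt _ (ltn0Sn m0); by rewrite e1 ltnS.
have l2 : (m0 <= (v0 + v0).+1)%N.
  rewrite -ltnS -(ltr_nat R) -!natr1 natrD; have := phi_lt2; have := phi_gt1.
  have : 0 <= (v0%:R : R) by [].
  move=> *; nra.
have [K eK] : exists K, m0 = (v0.+1 + K)%N by exists (m0 - v0.+1)%N; lia.
have [I eI] : exists I, (m0 + I = (v0 + v0).+1)%N by exists ((v0 + v0).+1 - m0)%N; lia.
have := @M_real phi (v0%:R + 1) (m0%:R + 1) phi2 phi_gt1.
rewrite -!natr1 in a2 a3 a4.
case; try lra.
have hK : (K%:R : R) = m0%:R - v0%:R - 1 by rewrite eK natrD -natr1; ring.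
have hI : (I%:R : R) = 2 * v0%:R + 1 - m0%:R.
  apply: (@addrI _ (m0%:R)); rewrite -natrD eI -natr1 natrD; ring.
move=> b1 b2.
have pl := phi_gt1.
have gK : g K = I.
  apply: gPl; rewrite hK hI; lra.
have gK1 : g K.+1 = I.+1.
  apply: gPl; rewrite -!natr1 hK hI; lra.
exists K; split; first by rewrite gK1 gK.
split; lia.
Qed.

Definition h (k : nat) : nat := if g k.-1 == g k then (g k).+1 else (k + g k)%N.

Lemma gS' k : g k.+1 <> g k -> g k.+1 = (g k).+1.
Proof. by case: (gS k). Qed.

Lemma h_inj a b : (0 < a)%N -> (a < b)%N -> h a <> h b.
Proof.
case: a => // A _. case: b => // B; rewrite ltnS => AB.
rewrite /h /=.
case: eqP => fa; case: eqP => fb.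
-
  move=> [] e.
  case: B fb AB e => // B fb AB e.
  have p1 := g_plateau B.
  case: (ltnP A B) => AB'.
    have := g_mono AB'; rewrite e -fb.
    case: (gS B) => ee; first by rewrite -fb ee in p1.
    rewrite ee; lia.
  have AeB : A = B by lia.
  subst A; by apply: p1; rewrite -fb -fa.
- move=> e; exact: (@D3 A B fa (@gS' B (nesym fb)) e).
- move=> e; exact: (@D3 B A fb (@gS' A (nesym fa)) (esym e)).
- move=> e.
  have := @g_mono A.+1 B.+1 (ltnW AB). lia.
Qed.

Lemma first_up N v : (v < g N)%N -> exists m, (m < N)%N /\ g m = v /\ g m.+1 = v.+1.
Proof.
elim: N => [|N IH]; first by rewrite g0.
case: (ltnP v (g N)) => h1 h2.
  by have [m [? ?]] := IH h1; exists m; split=> //; lia.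
exists N; case: (gS N) => e; first by rewrite e in h2; lia.
rewrite e in h2 *; split => //; split => //; lia.
Qed.

Lemma cover N v : (v < g N)%N -> exists k, (0 < k)%N /\ (k < N)%N /\ h k = v.+1.
Proof.
move=> vN.
have N0 : (0 < N)%N by case: N vN => //; rewrite g0.
have gN := g_lt N0.
have [[|M] [mN [e1 e2]]] := @first_up N v vN.
  by rewrite g1 -e1 g0 in e2.
case: (boolP (g M == g M.+1)) => fl.
  exists M.+1; split => //; split => //.
  by rewrite /h /= fl e1.
have e3 := @gS' M (nesym (elimN eqP fl)).
have [K [k1 [k2 k3]]] := @Mstep (g M) M (erefl _) e3 (etrans e2 (congr1 S (etrans (esym e1) e3))).
exists K.+1; split => //; split; first by lia.
rewrite /h /= (_ : (g K == g K.+1) = false); last by rewrite k1; elim: (g K).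
by rewrite k2 -e3 e1.
Qed.

Definition hh (k : nat) : nat := if k is 0 then 0%N else h k.

Lemma mkseqS (T : Type) (F : nat -> T) n : mkseq F n.+1 = rcons (mkseq F n) (F n).
Proof. by rewrite /mkseq -addn1 iotaD map_cat /= cats1. Qed.

Lemma sum_hh n : sumn (mkseq hh n.+1) = (n * (g n).+1)%N.
Proof.
elim: n => [|n IH]; first by [].
rewrite mkseqS -cats1 sumn_cat IH /= /h /=.
case: (gS n) => ->.
  rewrite eqxx; lia.
rewrite (_ : (g n == (g n).+1) = false); last by elim: (g n).
lia.
Qed.

Lemma find_iota_eq (p : pred nat) t L : (t < L)%N -> p t ->
  (forall m, (m < t)%N -> ~~ p m) -> find p (iota 0 L) = t.
Proof.
move=> tL pt hm.
have H : has p (iota 0 L) by apply/hasP; exists t => //; rewrite mem_iota.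
have hi : (find p (iota 0 L) < L)%N by move: H; rewrite has_find size_iota.
have pi := nth_find 0 H.
rewrite nth_iota // add0n in pi.
case: (ltngtP (find p (iota 0 L)) t) => // c.
  by have := hm _ c; rewrite pi.
have := before_find 0 c; rewrite nth_iota // add0n pt //.
Qed.

Lemma mem_hh n x : x \in mkseq hh n.+1 -> exists i, (i <= n)%N /\ x = hh i.
Proof.
by move/mapP => [i]; rewrite mem_iota add0n => /andP[_ hi] ->; exists i.
Qed.
Lemma hh_mem n i : (i <= n)%N -> hh i \in mkseq hh n.+1.
Proof. by move=> hi; apply: map_f; rewrite mem_iota add0n ltnS hi. Qed.

Lemma h_pos k : (0 < k)%N -> (0 < h k)%N.
Proof. by move=> k0; rewrite /h; case: eqP => _ //; lia. Qed.

Lemma greedy_hh n : greedy_next (mkseq hh n.+1) = h n.+1.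
Proof.
rewrite /greedy_next size_mkseq sum_hh.
have gN : (g n.+1 < n.+1)%N := g_lt (ltn0Sn n).
have notin : hh n.+1 \notin mkseq hh n.+1.
  apply/negP => /mem_hh [[|i] [iN e]].
    by move: e; rewrite /=; have := @h_pos n.+1 (ltn0Sn n); lia.
  exact: (@h_inj i.+1 n.+1 (ltn0Sn i) iN (esym e)).
have hN : hh n.+1 = h n.+1 by [].
apply: find_iota_eq.
- rewrite /h /=; case: eqP => _; lia.
- rewrite -hN notin /= /h /=.
  case: (gS n) => e; rewrite e.
    by rewrite eqxx; apply/dvdnP; exists (g n).+1; lia.
  rewrite (_ : (g n == (g n).+1) = false); last by elim: (g n).
  apply/dvdnP; exists (g n).+2; lia.
- move=> m mt; rewrite negb_and negbK.
  case: (posnP m) => [->|m0]; first by rewrite (@hh_mem n 0 (leq0n n)).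
  case: (gS n) => e.
  + move: mt; rewrite /h /= e eqxx => mt.
    apply/orP; right; apply/dvdnP => [[q eq]].
    rewrite e in gN.
    case: (ltnP q (g n).+1) => c; nia.
  + move: mt; rewrite /h /= e.
    rewrite (_ : (g n == (g n).+1) = false); last by elim: (g n).
    move=> mt.
    case: (eqVneq m (g n).+1) => [->|mr].
      have ve : (g n < g n.+1)%N by rewrite e.
      have [k [k0 [kN hk]]] := @cover n.+1 (g n) ve.
      apply/orP; left; rewrite -hk.
      have -> : h k = hh k by case: k k0 {hk kN}.
      by apply: hh_mem; lia.
    apply/orP; right; apply/dvdnP => [[q eq]].
    rewrite e in gN.
    case: (ltngtP q (g n).+1) => c.
    * nia.
    * nia.
    * subst q; lia.
Qed.

Lemma fseq_hh n : fseq n = mkseq hh n.+1.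
Proof. elim: n => [//|n IH]. by rewrite mkseqS [LHS]/= IH greedy_hh. Qed.

Lemma f_h n : (0 < n)%N -> f n = h n.
Proof. by case: n => // n _; rewrite /f fseq_hh mkseqS last_rcons. Qed.

Lemma h_bounds n : (0 < n)%N -> ((g n).+1 <= h n)%N /\ (h n <= n + g n)%N.
Proof. by move=> n0; rewrite /h; case: eqP => _; lia. Qed.

Lemma floor_g n : Num.floor (n%:R / phi) = (g n)%:Z.
Proof.
apply: floor_def.
have p0 := phi_gt0.
have /andP[a b] := truncn_itv (divr_ge0 (ler0n R n) (ltW p0)).
rewrite intrD -!pmulrn -/(g n) -natr1 in a b *.
by rewrite a b.
Qed.

Lemma floor_g2 n : Num.floor (n%:R * phi) = (n + g n)%N%:Z.
Proof.
apply: floor_def.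
have [a b] := gPr (erefl (g n)).
have p1 := phi_gt1.
rewrite intrD -!pmulrn natrD.
have hn : (0 <= n%:R :> R) by [].
have e : n%:R / phi = n%:R * (phi - 1) by rewrite -phi_inv mulrA mulr1.
have /andP[c d] := truncn_itv (divr_ge0 (ler0n R n) (ltW (phi_gt0))).
rewrite -/(g n) e -natr1 in c d.
apply/andP; split; nra.
Qed.

End Golden.
Local Close Scope ring_scope.

Theorem corollary5 (R : realType) (n : nat) : (1 <= n)%N ->
  let phi : R := ((1 + Num.sqrt 5) / 2)%R in
  (Num.floor (n%:R / phi) + 1 <= (f n)%:Z)%R /\
  ((f n)%:Z <= Num.floor (n%:R * phi))%R.
Proof.
move=> n0 phi.
have e1 := floor_g R n. have e2 := floor_g2 R n.
rewrite /phi e1 e2 (@f_h R n n0).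
have [b1 b2] := @h_bounds R n n0.
split; lia.
Qed.
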